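(* Let $\mathcal{X}=\{1,\dots,n\}$, let $\pi$ be a strictly positive probability distribution on $\mathcal{X}$, let $P$ be a $\pi$-reversible transition matrix, let $G$ be the Gibbs kernel induced by a partition $\mathcal{X}=\bigsqcup_{i=1}^k\mathcal{O}_i$, and let $A=\frac12(P+G)$. Then $$\|A-\Pi\|_{F,\pi}^2=\tfrac14\operatorname{Tr}(P^2)+\tfrac12\operatorname{Tr}(\overline{P})+\tfrac{k}{4}-1.$$
   Context: $\pi$-reversible means $\pi(x)P(x,y)=\pi(y)P(y,x)$ for all $x,y$. The Gibbs kernel is $G(x,y)=\pi(y)/\pi(\mathcal{O}(x))$ if $y\in\mathcal{O}(x)$ and $0$ otherwise, where $\mathcal{O}(x)$ is the block containing $x$ and $\pi(\mathcal{O})=\sum_{z\in\mathcal{O}}\pi(z)$. $\overline{P}(i,j)=\frac{1}{\pi(\mathcal{O}_i)}\sum_{x\in\mathcal{O}_i,\,y\in\mathcal{O}_j}\pi(x)P(x,y)$ is the projection chain. $\Pi$ is the matrix with every row equal to $\pi$. $\|M\|_{F,\pi}^2=\operatorname{Tr}(M^*M)$ with $M^*(x,y)=\pi(y)M(y,x)/\pi(x)$. *)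

(* Defs.v *)
From mathcomp Require Import all_boot all_order all_algebra.
Set Implicit Arguments. Unset Strict Implicit. Unset Printing Implicit Defensive.
Import Order.TTheory GRing.Theory Num.Theory.
Local Open Scope ring_scope.

(* State space X = 'I_n; pi : 'I_n -> R; partition given by block map blk : 'I_n -> 'I_k,
   block O_i = {x | blk x = i}. *)

Definition piO (R : realFieldType) (n k : nat) (pi : 'I_n -> R) (blk : 'I_n -> 'I_k)
  (i : 'I_k) : R := \sum_(z : 'I_n | blk z == i) pi z.

Definition gibbs (R : realFieldType) (n k : nat) (pi : 'I_n -> R) (blk : 'I_n -> 'I_k)
  : 'M[R]_n :=
  \matrix_(x, y) (if blk y == blk x then pi y / piO pi blk (blk x) else 0).

Definition proj_chain (R : realFieldType) (n k : nat) (pi : 'I_n -> R) (P : 'M[R]_n)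
  (blk : 'I_n -> 'I_k) : 'M[R]_k :=
  \matrix_(i, j) ((piO pi blk i)^-1 *
     \sum_(x : 'I_n | blk x == i) \sum_(y : 'I_n | blk y == j) pi x * P x y).

Definition Pimx (R : realFieldType) (n : nat) (pi : 'I_n -> R) : 'M[R]_n :=
  \matrix_(x, y) pi y.

Definition pi_adj (R : realFieldType) (n : nat) (pi : 'I_n -> R) (M : 'M[R]_n) : 'M[R]_n :=
  \matrix_(x, y) (pi y * M y x / pi x).

Definition frob2 (R : realFieldType) (n : nat) (pi : 'I_n -> R) (M : 'M[R]_n) : R :=
  \tr (pi_adj pi M *m M).

(* Main.v *)
Require Import Defs.
From mathcomp Require Import all_boot all_order all_algebra.
From mathcomp Require Import ring lra.
Import Order.TTheory GRing.Theory Num.Theory.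
Local Open Scope ring_scope.

Lemma frob2E (R : realFieldType) (n : nat) (pi : 'I_n -> R) (M : 'M[R]_n) :
  frob2 pi M = \sum_x \sum_y pi y * M y x ^+ 2 / pi x.
Proof.
rewrite /frob2 /mxtrace; apply: eq_bigr => x _; rewrite mxE.
apply: eq_bigr => y _; rewrite /pi_adj mxE; rewrite expr2; ring.
Qed.

Lemma sum2_lin (R : realFieldType) (n : nat) (a b : R) (F1 F2 F3 F4 F5 F6 : 'I_n -> 'I_n -> R) :
  \sum_x \sum_y (a * F1 x y + b * F2 x y + a * F3 x y - F4 x y - F5 x y + F6 x y)
  = a * (\sum_x \sum_y F1 x y) + b * (\sum_x \sum_y F2 x y) + a * (\sum_x \sum_y F3 x y)
    - (\sum_x \sum_y F4 x y) - (\sum_x \sum_y F5 x y) + (\sum_x \sum_y F6 x y).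
Proof.
rewrite !mulr_sumr -!sumrN -!big_split /=; apply: eq_bigr => x _.
rewrite !mulr_sumr -!sumrN -!big_split /=; apply: eq_bigr => y _.
done.
Qed.

Theorem corollary4p3 (R : realFieldType) (n k : nat) (pi : 'I_n -> R) (P : 'M[R]_n)
  (blk : 'I_n -> 'I_k) :
  (forall x, 0 < pi x) ->
  \sum_(x : 'I_n) pi x = 1 ->
  (forall x y, 0 <= P x y) ->
  (forall x, \sum_(y : 'I_n) P x y = 1) ->
  (forall x y, pi x * P x y = pi y * P y x) ->
  (forall i : 'I_k, exists x : 'I_n, blk x = i) ->
  frob2 pi ((2%:R)^-1 *: (P + gibbs pi blk) - Pimx pi)
  = (4%:R)^-1 * \tr (P *m P) + (2%:R)^-1 * \tr (proj_chain pi P blk)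
    + k%:R / 4%:R - 1.
Proof.
move=> Hpi Hsum HP0 Hrow Hrev Hblk.
set G := gibbs pi blk.
have piOy : forall y, 0 < piO pi blk (blk y).
  move=> y; apply: (lt_le_trans (Hpi y)).
  rewrite /piO (bigD1 y) //= lerDl sumr_ge0 // => z _; exact/ltW.
have piOi : forall i, 0 < piO pi blk i.
  by move=> i; case: (Hblk i) => x <-.
have pin0 : forall x, pi x != 0 by move=> x; rewrite gt_eqF.
have piOn0 : forall i, piO pi blk i != 0 by move=> i; rewrite gt_eqF.
have GE : forall y x, G y x = if blk x == blk y then pi x / piO pi blk (blk y) else 0.
  by move=> y x; rewrite /G /gibbs mxE.
rewrite frob2E.
have E : forall x y,
  pi y * ((2%:R)^-1 *: (P + G) - Pimx pi) y x ^+ 2 / pi x =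
  4%:R^-1 * (pi y * P y x ^+ 2 / pi x) + 2%:R^-1 * (pi y * P y x * G y x / pi x)
  + 4%:R^-1 * (pi y * G y x ^+ 2 / pi x) - pi y * P y x - pi y * G y x + pi y * pi x.
  move=> x y; rewrite !mxE; field; exact: pin0.
rewrite (eq_bigr _ (fun x _ => eq_bigr _ (fun y _ => E x y))) sum2_lin.
have S1 : \sum_x \sum_y pi y * P y x ^+ 2 / pi x = \tr (P *m P).
  rewrite /mxtrace; apply: eq_bigr => x _; rewrite mxE; apply: eq_bigr => y _.
  rewrite expr2 mulrA -Hrev; field; exact: pin0.
have S4 : \sum_x \sum_y pi y * P y x = 1.
  rewrite exchange_big /= -Hsum; apply: eq_bigr => y _.
  by rewrite -mulr_sumr Hrow mulr1.
have Grow : forall y, \sum_x G y x = 1.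
  move=> y; under eq_bigr => x _ do rewrite (GE y x).
  rewrite -big_mkcond /= -mulr_suml; exact: (divff (piOn0 (blk y))).
have S5 : \sum_x \sum_y pi y * G y x = 1.
  rewrite exchange_big /= -Hsum; apply: eq_bigr => y _.
  by rewrite -mulr_sumr Grow mulr1.
have S6 : \sum_x \sum_y pi y * pi x = 1.
  by under eq_bigr do rewrite -mulr_suml Hsum mul1r.
have S3 : \sum_x \sum_y pi y * G y x ^+ 2 / pi x = k%:R.
  rewrite exchange_big /=.
  have -> : \sum_y \sum_x pi y * G y x ^+ 2 / pi x = \sum_y pi y / piO pi blk (blk y).
    apply: eq_bigr => y _.
    have -> : \sum_x pi y * G y x ^+ 2 / pi x = \sum_x pi y / piO pi blk (blk y) * G y x.
      apply: eq_bigr => x _; rewrite GE; case: ifP => _; last by rewrite expr0n /= !mulr0 mul0r.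
      field; apply/andP; split; [exact: piOn0 | exact: pin0].
    by rewrite -mulr_sumr Grow mulr1.
  rewrite (partition_big blk xpredT) //=.
  transitivity (\sum_(i < k) (1:R)); last by rewrite sumr_const card_ord.
  apply: eq_bigr => i _.
  rewrite (eq_bigr (fun y => pi y / piO pi blk i)); last by move=> y /eqP ->.
  rewrite -mulr_suml; exact: (divff (piOn0 i)).
have S2 : \sum_x \sum_y pi y * P y x * G y x / pi x = \tr (proj_chain pi P blk).
  rewrite exchange_big /= (partition_big blk xpredT) //= /mxtrace.
  apply: eq_bigr => i _; rewrite mxE mulr_sumr; apply: eq_bigr => y /eqP Hy.
  rewrite [in RHS]big_mkcond /= mulr_sumr; apply: eq_bigr => x _.
  rewrite GE Hy; case: ifP => _; last by rewrite !mulr0 mul0r.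
  field; apply/andP; split; [exact: piOn0 | exact: pin0].
rewrite S1 S2 S3 S4 S5 S6; by field.
Qed.
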